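(* Let $X_1,\ldots,X_m$ be variables, let $r,s\ge1$, $t=rs$, let $c_1,\ldots,c_t\in\mathbb{N}^m$ with $\min_i c_{ij}=0$ for each $1\le j\le m$, and let $\rho:\{1,\ldots,r\}\times\{1,\ldots,s\}\to\{1,\ldots,t\}$ be a bijection. Then there is at most one factorisation of $\sum_{i=1}^t X^{c_i}$ of the form $(X^{a_1}+\cdots+X^{a_r})(X^{b_1}+\cdots+X^{b_s})=X^{c_1}+\cdots+X^{c_t}$ with bijection $\rho$, i.e. at most one pair of sequences $(a_1,\ldots,a_r)$, $(b_1,\ldots,b_s)$ in $\mathbb{N}^m$ with $a_i+b_j=c_{\rho(i,j)}$ for all $i,j$.
   Context: $\mathbb{N}=\{0,1,2,\ldots\}$; for $\gamma=(\gamma_1,\ldots,\gamma_m)\in\mathbb{N}^m$, $X^\gamma=\prod_{j=1}^m X_j^{\gamma_j}$. A factorisation of $\sum_{i=1}^t X^{c_i}$ of the given form is specified by sequences $(a_1,\ldots,a_r)$, $(b_1,\ldots,b_s)$ in $\mathbb{N}^m$ and a bijection $\rho:\{1,\ldots,r\}\times\{1,\ldots,s\}\to\{1,\ldots,t\}$ with $a_i+b_j=c_{\rho(i,j)}$ for all $i,j$. *)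

(* Defs.v *)
From mathcomp Require Import all_boot.
Set Implicit Arguments. Unset Strict Implicit. Unset Printing Implicit Defensive.

(* An exponent vector in N^m, indexed by 'I_m (0-based: X_1..X_m ~ 'I_m). *)
Definition expvec (m : nat) := 'I_m -> nat.

Definition is_factorisation (m r s : nat) (c : 'I_(r * s) -> expvec m)
  (rho : 'I_r * 'I_s -> 'I_(r * s)) (a : 'I_r -> expvec m) (b : 'I_s -> expvec m) : Prop :=
  forall (i : 'I_r) (j : 'I_s) (k : 'I_m), a i k + b j k = c (rho (i, j)) k.

(* Main.v *)
Require Import Defs.
From mathcomp Require Import all_boot.

Theorem mainTheorem6 (m r s : nat) (hr : 0 < r) (hs : 0 < s)
  (c : 'I_(r * s) -> expvec m)
  (hmin : forall j : 'I_m, exists i : 'I_(r * s), c i j = 0)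
  (rho : 'I_r * 'I_s -> 'I_(r * s)) (hrho : bijective rho)
  (a a' : 'I_r -> expvec m) (b b' : 'I_s -> expvec m) :
  is_factorisation c rho a b -> is_factorisation c rho a' b' ->
  (forall (i : 'I_r) (k : 'I_m), a i k = a' i k) /\
  (forall (j : 'I_s) (k : 'I_m), b j k = b' j k).
Proof.
move=> H1 H2.
have key : forall k : 'I_m, exists i0 j0,
    a i0 k = 0 /\ b j0 k = 0 /\ a' i0 k = 0 /\ b' j0 k = 0.
  move=> k; have [p hp] := hmin k.
  case: hrho => g _ grho.
  have e := grho p; move: e; case: (g p) => i0 j0 e.
  exists i0, j0.
  have := H1 i0 j0 k; have := H2 i0 j0 k; rewrite e hp.
  move/eqP; rewrite addn_eq0 => /andP [/eqP -> /eqP ->].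
  by move/eqP; rewrite addn_eq0 => /andP [/eqP -> /eqP ->].
split.
- move=> i k; have [i0 [j0 [h1 [h2 [h3 h4]]]]] := key k.
  have := H1 i j0 k; have := H2 i j0 k; rewrite h2 h4 !addn0 => -> //.
- move=> j k; have [i0 [j0 [h1 [h2 [h3 h4]]]]] := key k.
  have := H1 i0 j k; have := H2 i0 j k; rewrite h1 h3 !add0n => -> //.
Qed.
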